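(* Let $d\ge2$, let $f$ be a contractive function on pairs of $d$-dimensional states which is, in addition, continuous. Let $(\Lambda_t)_{t\ge0}$ be any family of CPTP maps with $\Lambda_0=\mathrm{id}$, let $\rho,\sigma$ be states, and let $0=t_0<t_1<t_2<\dots$ be time steps such that the sequence $f_i:=f(\Lambda_{t_i}[\rho],\Lambda_{t_i}[\sigma])$ is non-increasing in $i$. Then there exist parameters $a_i\in[0,1]$ such that, with the CPTP (depolarizing) maps $W_{t_{i+1},t_i}[X]=a_i^{\,t_{i+1}-t_i}X+(1-a_i^{\,t_{i+1}-t_i})\,\mathrm{Tr}(X)\frac{\mathbb 1_d}{d}$ and the states $\mu_0=\rho$, $\tau_0=\sigma$, $\mu_{i+1}=W_{t_{i+1},t_i}[\mu_i]$, $\tau_{i+1}=W_{t_{i+1},t_i}[\tau_i]$, one has $f(\mu_i,\tau_i)=f_i$ for all $i$. In other words, any non-increasing profile of a contractive function can be reproduced by a CP-divisible (Markovian) evolution.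
   Context: A function $f(\rho,\sigma)$ is contractive if $f(\Lambda[\rho],\Lambda[\sigma])\le f(\rho,\sigma)$ for every CPTP map $\Lambda$ and all states $\rho,\sigma$. *)

(* Defs.v *)
From Stdlib Require Import Reals.
From mathcomp Require Import ssreflect ssrfun ssrbool eqtype ssrnat seq choice fintype bigop.
Set Implicit Arguments. Unset Strict Implicit.
Open Scope R_scope.

Record C := mkC { re : R; im : R }.
Definition C0 : C := mkC 0 0.
Definition C1 : C := mkC 1 0.
Definition RtoC (x : R) : C := mkC x 0.
Definition Cadd (z w : C) : C := mkC (re z + re w) (im z + im w).
Definition Copp (z : C) : C := mkC (- re z) (- im z).
Definition Csub (z w : C) : C := Cadd z (Copp w).
Definition Cmul (z w : C) : C :=
  mkC (re z * re w - im z * im w) (re z * im w + im z * re w).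
Definition Cconj (z : C) : C := mkC (re z) (- im z).
Definition Cmod (z : C) : R := sqrt (re z * re z + im z * im z).

Definition MatT (T : finType) := T -> T -> C.
Definition Mat (d : nat) := MatT (ordinal d).

Definition csum (T : finType) (F : T -> C) : C := \big[Cadd/C0]_(i : T) F i.

Definition trace (T : finType) (X : MatT T) : C := csum (fun i => X i i).

Definition hermitian (T : finType) (X : MatT T) : Prop :=
  forall i j, X j i = Cconj (X i j).

Definition psd (T : finType) (X : MatT T) : Prop :=
  hermitian X /\
  forall v : T -> C,
    0 <= re (csum (fun i => csum (fun j => Cmul (Cmul (Cconj (v i)) (X i j)) (v j)))).

Definition state (d : nat) (X : Mat d) : Prop := psd X /\ trace X = C1.

Definition linear_map (d : nat) (L : Mat d -> Mat d) : Prop :=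
  (forall X Y i j, L (fun a b => Cadd (X a b) (Y a b)) i j = Cadd (L X i j) (L Y i j)) /\
  (forall (c : C) X i j, L (fun a b => Cmul c (X a b)) i j = Cmul c (L X i j)).

(* the map id_k (x) L acting on matrices on C^k (x) C^d *)
Definition ampl (d k : nat) (L : Mat d -> Mat d) (M : MatT (prod (ordinal k) (ordinal d)))
  : MatT (prod (ordinal k) (ordinal d)) :=
  fun p q => L (fun a b => M (p.1, a) (q.1, b)) p.2 q.2.

Definition completely_positive (d : nat) (L : Mat d -> Mat d) : Prop :=
  forall (k : nat) (M : MatT (prod (ordinal k) (ordinal d))), psd M -> psd (ampl L M).

Definition trace_preserving (d : nat) (L : Mat d -> Mat d) : Prop :=
  forall X, trace (L X) = trace X.

Definition CPTP (d : nat) (L : Mat d -> Mat d) : Prop :=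
  linear_map L /\ completely_positive L /\ trace_preserving L.

Definition contractive (d : nat) (f : Mat d -> Mat d -> R) : Prop :=
  forall L : Mat d -> Mat d, CPTP L ->
  forall rho sigma, state rho -> state sigma -> f (L rho) (L sigma) <= f rho sigma.

Definition continuous_on_states (d : nat) (f : Mat d -> Mat d -> R) : Prop :=
  forall rho sigma, state rho -> state sigma ->
  forall eps, 0 < eps -> exists delta, 0 < delta /\
    forall rho' sigma', state rho' -> state sigma' ->
      (forall i j, Cmod (Csub (rho' i j) (rho i j)) < delta) ->
      (forall i j, Cmod (Csub (sigma' i j) (sigma i j)) < delta) ->
      Rabs (f rho' sigma' - f rho sigma) < eps.

(* real power a^s for a in [0,1], s > 0, with the convention 0^s = 0
   (Stdlib's Rpower would give Rpower 0 s = 1). *)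
Definition rpow (a s : R) : R :=
  if Rlt_dec 0 a then Rpower a s else 0.

Definition kron (d : nat) (i j : ordinal d) : C := if i == j then C1 else C0.

Definition depol (d : nat) (b : R) (X : Mat d) : Mat d :=
  fun i j => Cadd (Cmul (RtoC b) (X i j))
                  (Cmul (RtoC ((1 - b) / INR d)) (Cmul (trace X) (kron i j))).

Definition W (d : nat) (a t : nat -> R) (i : nat) : Mat d -> Mat d :=
  depol (rpow (a i) (t (S i) - t i)).

Fixpoint evol (d : nat) (a t : nat -> R) (rho : Mat d) (i : nat) : Mat d :=
  match i with
  | O => rho
  | S n => W a t n (evol a t rho n)
  end.

(* Main.v *)
Require Import Defs.
From Stdlib Require Import Reals.
From mathcomp Require Import ssreflect ssrfun ssrbool eqtype ssrnat seq choice fintype bigop.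
From HB Require Import structures.
From Stdlib Require Import Lra ClassicalEpsilon FunctionalExtensionality.
Open Scope R_scope.
Set Warnings "-notation-overridden".
Set Implicit Arguments. Unset Strict Implicit.
Local Notation C := Defs.C (only parsing).
Local Notation C0 := Defs.C0 (only parsing).
Local Notation C1 := Defs.C1 (only parsing).

Lemma Ceq (z w : Defs.C) : re z = re w -> im z = im w -> z = w.
Proof. by case: z => ??; case: w => ?? /= -> ->. Qed.

Ltac Csolve := repeat match goal with z : Defs.C |- _ => destruct z end;
  apply Ceq; rewrite /Cadd /Cmul /Copp /Csub /Cconj /RtoC /C0 /C1 /=; ring.

Lemma CaddA : associative Cadd. Proof. move=> *; Csolve. Qed.
Lemma CaddC : commutative Cadd. Proof. move=> *; Csolve. Qed.
Lemma Cadd0l : left_id C0 Cadd. Proof. move=> *; Csolve. Qed.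
HB.instance Definition _ := Monoid.isComLaw.Build Defs.C C0 Cadd CaddA CaddC Cadd0l.
Lemma Cmul0l : left_zero C0 Cmul. Proof. move=> *; Csolve. Qed.
Lemma Cmul0r : right_zero C0 Cmul. Proof. move=> *; Csolve. Qed.
HB.instance Definition _ := Monoid.isMulLaw.Build Defs.C C0 Cmul Cmul0l Cmul0r.
Lemma CmulDl : left_distributive Cmul Cadd. Proof. move=> *; Csolve. Qed.
Lemma CmulDr : right_distributive Cmul Cadd. Proof. move=> *; Csolve. Qed.
HB.instance Definition _ := Monoid.isAddLaw.Build Defs.C Cmul Cadd CmulDl CmulDr.

Lemma RplusA : associative Rplus. Proof. move=> *; ring. Qed.
Lemma RplusC : commutative Rplus. Proof. move=> *; ring. Qed.
Lemma Rplus0l : left_id 0 Rplus. Proof. move=> *; ring. Qed.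
HB.instance Definition _ := Monoid.isComLaw.Build R 0 Rplus RplusA RplusC Rplus0l.

Lemma csum_add (T : finType) (F G : T -> Defs.C) :
  csum (fun i => Cadd (F i) (G i)) = Cadd (csum F) (csum G).
Proof. by rewrite /csum big_split. Qed.

Lemma csum_mull (T : finType) c (F : T -> Defs.C) :
  csum (fun i => Cmul c (F i)) = Cmul c (csum F).
Proof. by rewrite /csum big_distrr. Qed.

Lemma csum_ext (T : finType) (F G : T -> Defs.C) : (forall i, F i = G i) -> csum F = csum G.
Proof. move=> H; rewrite /csum; apply: eq_bigr => i _; exact: H. Qed.

Lemma re_csum (T : finType) (F : T -> Defs.C) :
  re (csum F) = \big[Rplus/0]_(i : T) re (F i).
Proof. rewrite /csum; apply: (big_morph re) => //. Qed.

Lemma csum_ge0 (T : finType) (F : T -> Defs.C) : (forall i, 0 <= re (F i)) -> 0 <= re (csum F).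
Proof.
move=> H; rewrite /csum; apply: (big_ind (fun z => 0 <= re z)) => //=.
  lra.
move=> x y /= ??; lra.
Qed.

Lemma csum_kron (T : finType) (i : T) (F : T -> Defs.C) :
  csum (fun j => if i == j then F j else C0) = F i.
Proof.
rewrite /csum -big_mkcond /=.
rewrite (eq_bigl (fun j => j == i)) ?big_pred1_eq // => j; by rewrite eq_sym.
Qed.

Lemma csum_pair (I J : finType) (F : I -> J -> Defs.C) :
  csum (fun i => csum (fun j => F i j)) = csum (fun p : I * J => F p.1 p.2).
Proof. by rewrite /csum pair_bigA. Qed.

Lemma csum_exch (I J : finType) (F : I -> J -> Defs.C) :
  csum (fun i => csum (fun j => F i j)) = csum (fun j => csum (fun i => F i j)).
Proof. by rewrite /csum exchange_big. Qed.

Lemma Cconj_csum (T : finType) (F : T -> Defs.C) : Cconj (csum F) = csum (fun i => Cconj (F i)).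
Proof. rewrite /csum; apply: (big_morph Cconj) => [x y|]; Csolve. Qed.

Lemma csum_C1 (d : nat) : csum (fun i : ordinal d => C1) = RtoC (INR d).
Proof.
rewrite /csum big_const_ord; elim: d => [|n IH] /=; first by apply Ceq.
rewrite IH; case: n {IH} => [|n]; apply Ceq => /=; ring.
Qed.

Lemma trace_kron (d : nat) : csum (fun i : ordinal d => kron i i) = RtoC (INR d).
Proof. rewrite -csum_C1; apply csum_ext => i; by rewrite /kron eqxx. Qed.

Lemma trace_depol (d : nat) b (X : Mat d) : (0 < d)%nat -> trace (depol b X) = trace X.
Proof.
move=> hd; rewrite /trace /depol csum_add.
have -> : csum (fun i : ordinal d => Cmul (RtoC ((1 - b) / INR d)) (Cmul (csum (fun i0 => X i0 i0)) (kron i i)))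
  = Cmul (RtoC ((1 - b) / INR d)) (Cmul (csum (fun i0 => X i0 i0)) (RtoC (INR d))).
  rewrite (csum_mull (RtoC _) (fun i => Cmul _ (kron i i))).
  by rewrite (csum_mull _ (fun i => kron i i)) trace_kron.
rewrite csum_mull.
have hn : INR d <> 0 by apply: not_0_INR => hd0; move: hd; rewrite hd0.
move: (csum _) => z; destruct z; apply Ceq; rewrite /= ; field; auto.
Qed.

Definition Qf (T : finType) (v : T -> C) (X : MatT T) : C :=
  csum (fun i => csum (fun j => Cmul (Cmul (Cconj (v i)) (X i j)) (v j))).

Lemma Q_depol (d : nat) b (X : Mat d) (v : ordinal d -> C) :
  Qf v (depol b X) = Cadd (Cmul (RtoC b) (Qf v X))
     (Cmul (RtoC ((1 - b) / INR d)) (Cmul (trace X) (csum (fun i => Cmul (Cconj (v i)) (v i))))).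
Proof.
rewrite /Qf /depol.
set c := RtoC ((1 - b) / INR d); set t := trace X.
transitivity (csum (fun i => Cadd (Cmul (RtoC b) (csum (fun j => Cmul (Cmul (Cconj (v i)) (X i j)) (v j))))
   (Cmul c (Cmul t (Cmul (Cconj (v i)) (v i)))))); last first.
  by rewrite csum_add csum_mull csum_mull csum_mull.
apply: csum_ext => i.
transitivity (csum (fun j => Cadd (Cmul (RtoC b) (Cmul (Cmul (Cconj (v i)) (X i j)) (v j)))
   (Cmul c (Cmul t (if i == j then Cmul (Cconj (v i)) (v j) else C0))))).
  apply: csum_ext => j; rewrite /kron; case: eqP => _;
  move: (v i) (v j) (X i j) c t => *; Csolve.
rewrite csum_add csum_mull csum_mull (csum_mull t) csum_kron //.
Qed.

Lemma state_depol (d : nat) b (X : Mat d) : (0 < d)%nat -> 0 <= b <= 1 ->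
  state X -> state (depol b X).
Proof.
move=> hd hb [[hh hp] ht]; split; last by rewrite trace_depol.
split.
  move=> i j; rewrite /depol hh ht.
  have -> : kron j i = kron i j by rewrite /kron eq_sym.
  rewrite /kron; case: (i == j); move: (X i j) => *; Csolve.
move=> v; rewrite -/(Qf v _) Q_depol ht.
have h1 := hp v; rewrite -/(Qf v X) in h1.
have h2 : 0 <= re (csum (fun i => Cmul (Cconj (v i)) (v i))).
  apply: csum_ge0 => i; move: (v i) => [x y] /=; nra.
have hn : 0 < INR d by apply: lt_0_INR; apply/ltP.
have hc : 0 <= (1 - b) / INR d by apply: Rmult_le_pos; [lra | apply: Rlt_le; apply: Rinv_0_lt_compat].
move: (Qf v X) (csum _) h1 h2 => [q1 q2] [s1 s2] /= h1 h2.
nra.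
Qed.

Lemma csum_pair' (I J : finType) (G : I * J -> C) :
  csum G = csum (fun i => csum (fun j => G (i, j))).
Proof. rewrite csum_pair; apply: csum_ext; by case. Qed.

Lemma csum_ord1 (F : ordinal 1 -> C) : csum F = F ord0.
Proof. by rewrite /csum big_ord1. Qed.

Lemma Qf_lift (d : nat) (N : Mat d) (V : ordinal 1 * ordinal d -> C) :
  Qf V (fun p q => N p.2 q.2) = Qf (fun a => V (ord0, a)) N.
Proof.
rewrite /Qf csum_pair' csum_ord1; apply: csum_ext => i.
by rewrite csum_pair' csum_ord1.
Qed.

Lemma CPTP_state (d : nat) (L : Mat d -> Mat d) (X : Mat d) :
  CPTP L -> state X -> state (L X).
Proof.
move=> [hlin [hcp htp]] [[hh hp] ht]; split; last by rewrite htp.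
pose M : MatT (prod (ordinal 1) (ordinal d)) := fun p q => X p.2 q.2.
have hM : psd M.
  split; first by move=> p q; rewrite /M hh.
  move=> V; rewrite -/(Qf V M) /M Qf_lift; exact: hp.
have [hh' hp'] := hcp 1%nat M hM.
split.
  move=> i j; exact: (hh' (ord0, i) (ord0, j)).
move=> v; have := hp' (fun p => v p.2).
rewrite -/(Qf _ _) -/(Qf v (L X)).
have -> : ampl L M = fun p q => L X p.2 q.2 by [].
by rewrite Qf_lift.
Qed.

Lemma csum0 (T : finType) : csum (fun _ : T => C0) = C0.
Proof. by rewrite /csum big1. Qed.

Section CP.
Variables (k d : nat) (M : MatT (prod (ordinal k) (ordinal d))) (v : prod (ordinal k) (ordinal d) -> C).

Definition canon : C :=
  csum (fun b => csum (fun a => csum (fun p1 => csum (fun q1 =>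
     Cmul (Cmul (Cconj (v (p1, b))) (v (q1, b))) (M (p1, a) (q1, a)))))).

Lemma lhs_canon :
  Qf v (ampl (depol 0) M) = Cmul (RtoC ((1 - 0) / INR d)) canon.
Proof.
set c := RtoC ((1 - 0) / INR d).
transitivity (Cmul c (csum (fun p1 => csum (fun b => csum (fun q1 => csum (fun a =>
     Cmul (Cmul (Cconj (v (p1, b))) (v (q1, b))) (M (p1, a) (q1, a)))))))).
  rewrite /Qf csum_pair' -csum_mull; apply: csum_ext => p1.
  rewrite -csum_mull; apply: csum_ext => b.
  rewrite csum_pair' -csum_mull; apply: csum_ext => q1.
  rewrite -(csum_kron b (fun q2 => Cmul c (csum (fun a =>
     Cmul (Cmul (Cconj (v (p1, b))) (v (q1, q2))) (M (p1, a) (q1, a)))))).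
  apply: csum_ext => q2; rewrite /ampl /depol /trace /kron /=.
  case: eqP => [<-|_].
    rewrite csum_mull.
    move: (v (p1, b)) (v (q1, b)) (M (p1, b) (q1, b)) (csum _) => *; rewrite /c; Csolve.
  move: (v (p1, b)) (v (q1, q2)) (M (p1, b) (q1, q2)) (csum _) => *; rewrite /c; Csolve.
congr Cmul; rewrite /canon.
rewrite csum_exch; apply: csum_ext => b.
transitivity (csum (fun p1 => csum (fun a => csum (fun q1 =>
     Cmul (Cmul (Cconj (v (p1, b))) (v (q1, b))) (M (p1, a) (q1, a)))))).
  by apply: csum_ext => p1; rewrite csum_exch.
by rewrite csum_exch.
Qed.

Lemma rhs_canon :
  csum (fun b => csum (fun a => Qf (fun p : prod (ordinal k) (ordinal d) =>
     if a == p.2 then v (p.1, b) else C0) M)) = canon.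
Proof.
rewrite /canon; apply: csum_ext => b; apply: csum_ext => a.
rewrite /Qf csum_pair'; apply: csum_ext => p1.
rewrite -(csum_kron a (fun p2 => csum (fun q1 =>
     Cmul (Cmul (Cconj (v (p1, b))) (v (q1, b))) (M (p1, p2) (q1, a))))).
apply: csum_ext => p2 /=; case: eqP => [<-|_].
  rewrite csum_pair'; apply: csum_ext => q1.
  rewrite -(csum_kron a (fun q2 =>
     Cmul (Cmul (Cconj (v (p1, b))) (v (q1, b))) (M (p1, a) (q1, q2)))).
  apply: csum_ext => q2 /=; case: eqP => _;
  move: (v (p1, b)) (v (q1, b)) (M (p1, a) (q1, q2)) => *; Csolve.
transitivity (csum (fun _ : prod (ordinal k) (ordinal d) => C0)); last exact: csum0.
apply: csum_ext => q.
move: (M (p1, p2) q) (if a == q.2 then v (q.1, b) else C0) => *; Csolve.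
Qed.
End CP.

Lemma depol0_CPTP (d : nat) : (0 < d)%nat -> CPTP (depol (d:=d) 0).
Proof.
move=> hd; split; [split|split].
- move=> X Y i j; rewrite /depol /trace csum_add.
  rewrite /kron; case: (i == j);
  move: (X i j) (Y i j) (csum (fun i => X i i)) (csum (fun i => Y i i)) => *; Csolve.
- move=> c X i j; rewrite /depol /trace csum_mull.
  rewrite /kron; case: (i == j);
  move: (X i j) (csum (fun i => X i i)) => *; Csolve.
- move=> k M [hh hp]; split.
    move=> p q; rewrite /ampl /depol /trace /=.
    have -> : csum (fun i => M (q.1, i) (p.1, i)) = Cconj (csum (fun i => M (p.1, i) (q.1, i))).
      by rewrite Cconj_csum; apply: csum_ext => i; rewrite hh.
    have -> : M (q.1, q.2) (p.1, p.2) = Cconj (M (p.1, p.2) (q.1, q.2)) by apply: hh.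
    have -> : kron q.2 p.2 = kron p.2 q.2 by rewrite /kron eq_sym.
    rewrite /kron; case: (p.2 == q.2);
    move: (M (p.1, p.2) (q.1, q.2)) (csum _) => *; Csolve.
  move=> v; rewrite -/(Qf v _) lhs_canon -rhs_canon.
  have hn : 0 < INR d by apply: lt_0_INR; apply/ltP.
  have H : 0 <= re (csum (fun b => csum (fun a => Qf (fun p : prod (ordinal k) (ordinal d) =>
     if a == p.2 then v (p.1, b) else C0) M))).
    apply: csum_ge0 => b; apply: csum_ge0 => a; exact: hp.
  move: (csum _) H => [z1 z2] /= H.
  have : 0 <= (1 - 0) / INR d by apply: Rmult_le_pos; [lra | apply: Rlt_le; apply: Rinv_0_lt_compat].
  nra.
- move=> X; exact: trace_depol.
Qed.

Lemma depol1 (d : nat) (X : Mat d) : depol 1 X = X.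
Proof.
apply: functional_extensionality => i; apply: functional_extensionality => j.
rewrite /depol; move: (X i j) (Cmul (trace X) (kron i j)) => *.
have -> : (1 - 1) / INR d = 0 by rewrite Rminus_diag /Rdiv Rmult_0_l.
Csolve.
Qed.

Lemma depol0_eq (d : nat) (X Y : Mat d) : trace X = trace Y -> depol 0 X = depol 0 Y.
Proof.
move=> h; apply: functional_extensionality => i; apply: functional_extensionality => j.
rewrite /depol h; move: (X i j) (Y i j) (Cmul (trace Y) (kron i j)) => *; Csolve.
Qed.

Definition clamp (b : R) := Rmax 0 (Rmin 1 b).

Lemma clamp_in b : 0 <= clamp b <= 1.
Proof. rewrite /clamp /Rmax /Rmin; repeat case: Rle_dec; lra. Qed.

Lemma clamp_id b : 0 <= b <= 1 -> clamp b = b.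
Proof. rewrite /clamp /Rmax /Rmin; repeat case: Rle_dec; lra. Qed.

Lemma clamp_lip x y : Rabs (clamp x - clamp y) <= Rabs (x - y).
Proof.
rewrite /clamp /Rmax /Rmin /Rabs; repeat case: Rle_dec; repeat case: Rcase_abs; lra.
Qed.

Lemma Cmod_ge0 z : 0 <= Cmod z.
Proof. exact: sqrt_pos. Qed.

Lemma Cmod_scal r w : Cmod (Cmul (RtoC r) w) = Rabs r * Cmod w.
Proof.
case: w => x y; rewrite /Cmod /Cmul /RtoC /=.
have -> : (r * x - 0 * y) * (r * x - 0 * y) + (r * y + 0 * x) * (r * y + 0 * x)
  = Rsqr r * (x * x + y * y) by rewrite /Rsqr; ring.
rewrite sqrt_mult_alt ?sqrt_Rsqr_abs //; exact: Rle_0_sqr.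
Qed.

Lemma le_Rsum (T : finType) (F : T -> R) (i : T) :
  (forall j, 0 <= F j) -> F i <= \big[Rplus/0]_(j : T) F j.
Proof.
move=> H; rewrite (bigD1 i) //=.
have : 0 <= \big[Rplus/0]_(j | j != i) F j.
  apply: (big_ind (fun z => 0 <= z)) => //; [lra | move=> *; lra].
lra.
Qed.

Definition wdev (d : nat) (X : Mat d) i j :=
  Csub (X i j) (Cmul (RtoC (/ INR d)) (Cmul (trace X) (kron i j))).

Lemma depol_diff (d : nat) (X : Mat d) b b0 i j :
  Csub (depol b X i j) (depol b0 X i j) = Cmul (RtoC (b - b0)) (wdev X i j).
Proof.
rewrite /depol /wdev /Rdiv; move: (X i j) (Cmul (trace X) (kron i j)) => *; Csolve.
Qed.

Lemma g_cont (d : nat) (hd : (0 < d)%nat) (f : Mat d -> Mat d -> R)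
  (hf : continuous_on_states f) (m s : Mat d) (hm : state m) (hs : state s) :
  continuity (fun b => f (depol (clamp b) m) (depol (clamp b) s)).
Proof.
pose B := 1 + \big[Rplus/0]_(p : prod (ordinal d) (ordinal d))
   (Cmod (wdev m p.1 p.2) + Cmod (wdev s p.1 p.2)).
have hB0 : 0 < B.
  rewrite /B; have : 0 <= \big[Rplus/0]_(p : prod (ordinal d) (ordinal d))
   (Cmod (wdev m p.1 p.2) + Cmod (wdev s p.1 p.2)).
    apply: (big_ind (fun z => 0 <= z)) => //; [lra | move=> *; lra |].
    move=> p _; apply: Rplus_le_le_0_compat; exact: Cmod_ge0.
  move=> ?; lra.
have hBm : forall i j, Cmod (wdev m i j) <= B /\ Cmod (wdev s i j) <= B.
  move=> i j.
  have := @le_Rsum _ (fun p : prod (ordinal d) (ordinal d) =>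
     Cmod (wdev m p.1 p.2) + Cmod (wdev s p.1 p.2)) (i, j).
  move=> H; have {}H := H (fun p => Rplus_le_le_0_compat _ _ (Cmod_ge0 _) (Cmod_ge0 _)).
  rewrite /B /=; have := Cmod_ge0 (wdev m i j); have := Cmod_ge0 (wdev s i j); simpl in H; move=> ??; lra.
move=> b0 eps heps.
have hs0 := state_depol hd (clamp_in b0) hm.
have hs1 := state_depol hd (clamp_in b0) hs.
have [delta [hdel H]] := hf _ _ hs0 hs1 eps heps.
exists (delta / B); split.
  apply: Rlt_gt; apply: Rdiv_lt_0_compat => //.
move=> x [_ hx]; rewrite /= /R_dist in hx *.
have hcl := clamp_lip x b0.
have hsmall : Rabs (clamp x - clamp b0) * B < delta.
  have : Rabs (x - b0) * B < delta / B * B by apply: Rmult_lt_compat_r.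
  have -> : delta / B * B = delta by field; lra.
  have : Rabs (clamp x - clamp b0) * B <= Rabs (x - b0) * B by apply: Rmult_le_compat_r; lra.
  lra.
apply: H.
- exact: state_depol hd (clamp_in x) hm.
- exact: state_depol hd (clamp_in x) hs.
- move=> i j; rewrite depol_diff Cmod_scal.
  have [h1 _] := hBm i j.
  have : Rabs (clamp x - clamp b0) * Cmod (wdev m i j) <= Rabs (clamp x - clamp b0) * B.
    apply: Rmult_le_compat_l => //; exact: Rabs_pos.
  lra.
- move=> i j; rewrite depol_diff Cmod_scal.
  have [_ h1] := hBm i j.
  have : Rabs (clamp x - clamp b0) * Cmod (wdev s i j) <= Rabs (clamp x - clamp b0) * B.
    apply: Rmult_le_compat_l => //; exact: Rabs_pos.
  lra.
Qed.

Lemma step_exists (d : nat) (hd : (0 < d)%nat) (f : Mat d -> Mat d -> R)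
  (hf : continuous_on_states f) (m s : Mat d) (hm : state m) (hs : state s) y :
  f (depol 0 m) (depol 0 s) <= y <= f m s ->
  exists b, 0 <= b <= 1 /\ f (depol b m) (depol b s) = y.
Proof.
move=> [h0 h1].
have g0 : f (depol (clamp 0) m) (depol (clamp 0) s) = f (depol 0 m) (depol 0 s).
  by rewrite clamp_id //; lra.
have g1 : f (depol (clamp 1) m) (depol (clamp 1) s) = f m s.
  by rewrite clamp_id ?depol1 //; lra.
case: (Req_dec y (f (depol 0 m) (depol 0 s))) => [->|ne0].
  exists 0; split => //; lra.
case: (Req_dec y (f m s)) => [->|ne1].
  exists 1; split; [lra | by rewrite !depol1].
have hc := continuity_minus _ _ (g_cont hd hf hm hs) (continuity_const (fun _ => y) (fun _ _ => erefl)).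
have [z [hz hz0]] := IVT _ 0 1 hc Rlt_0_1 ltac:(rewrite /minus_fct g0; lra) ltac:(rewrite /minus_fct g1; lra).
exists z; split => //.
rewrite /minus_fct clamp_id // in hz0; lra.
Qed.

Lemma root_pow b D : 0 <= b <= 1 -> 0 < D ->
  let a := if Rlt_dec 0 b then Rpower b (/ D) else 0 in
  0 <= a <= 1 /\ rpow a D = b.
Proof.
move=> hb hD /=; case: Rlt_dec => hb0 /=.
  have ha : 0 < Rpower b (/ D) by rewrite /Rpower; apply: exp_pos.
  split.
    split; first lra.
    have hl : ln b <= 0.
      case: (Req_dec b 1) => [->|h]; first by rewrite ln_1; lra.
      rewrite -ln_1; left; apply: ln_increasing; lra.
    have hx : / D * ln b <= 0.
      have := Rinv_0_lt_compat _ hD; nra.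
    rewrite /Rpower -exp_0; case: hx => hx; last by rewrite hx; right.
    left; exact: exp_increasing.
  rewrite /rpow; case: Rlt_dec => [hp|hn] /=; last by case: hn.
  rewrite Rpower_mult Rinv_l ?Rpower_1 //; lra.
split; first lra.
rewrite /rpow; case: Rlt_dec => hp /=; first lra.
lra.
Qed.

Section Main.
Variables (d : nat) (f : Mat d -> Mat d -> R) (tgt : nat -> R) (rho sigma : Mat d).

Definition bsel (i : nat) (ms : Mat d * Mat d) : R :=
  epsilon (inhabits 0) (fun b => 0 <= b <= 1 /\ f (depol b ms.1) (depol b ms.2) = tgt (S i)).

Fixpoint Pseq (i : nat) : Mat d * Mat d :=
  match i with
  | O => (rho, sigma)
  | S n => (depol (bsel n (Pseq n)) (Pseq n).1, depol (bsel n (Pseq n)) (Pseq n).2)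
  end.
End Main.

Theorem mainTheorem8
  (d : nat) (hd : (2 <= d)%nat)
  (f : Mat d -> Mat d -> R)
  (hf_contr : contractive f)
  (hf_cont : continuous_on_states f)
  (Lam : R -> Mat d -> Mat d)
  (hLam : forall s, 0 <= s -> CPTP (Lam s))
  (hLam0 : forall X i j, Lam 0 X i j = X i j)
  (rho sigma : Mat d) (hrho : state rho) (hsigma : state sigma)
  (t : nat -> R) (ht0 : t O = 0) (ht : forall i, t i < t (S i))
  (hnoninc : forall i, f (Lam (t (S i)) rho) (Lam (t (S i)) sigma)
                       <= f (Lam (t i) rho) (Lam (t i) sigma)) :
  exists a : nat -> R,
    (forall i, 0 <= a i <= 1) /\
    (forall i, f (evol a t rho i) (evol a t sigma i)
               = f (Lam (t i) rho) (Lam (t i) sigma)).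
Proof.
have hd0 : (0 < d)%nat by apply: leq_trans hd.
pose tgt := fun i => f (Lam (t i) rho) (Lam (t i) sigma).
have htpos : forall i, 0 <= t i.
  elim=> [|i IH]; first by rewrite ht0; lra.
  have := ht i; lra.
have hstL : forall i, state (Lam (t i) rho) /\ state (Lam (t i) sigma).
  move=> i; split; apply: CPTP_state => //; exact: hLam.
have hlow : forall i m s, state m -> state s -> f (depol 0 m) (depol 0 s) <= tgt (S i).
  move=> i m s hm hs; have [h1 h2] := hstL (S i).
  rewrite (@depol0_eq _ m (Lam (t (S i)) rho)); last by rewrite hm.2 h1.2.
  rewrite (@depol0_eq _ s (Lam (t (S i)) sigma)); last by rewrite hs.2 h2.2.
  exact: hf_contr (depol0_CPTP hd0) _ _ h1 h2.
pose P := Pseq f tgt rho sigma.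
pose inv i := state (P i).1 /\ state (P i).2 /\ f (P i).1 (P i).2 = tgt i.
have hspec : forall i, inv i ->
    0 <= bsel f tgt i (P i) <= 1 /\
    f (depol (bsel f tgt i (P i)) (P i).1) (depol (bsel f tgt i (P i)) (P i).2) = tgt (S i).
  move=> i [h1 [h2 h3]]; rewrite /bsel.
  apply: (@epsilon_spec R (inhabits 0) (fun b => 0 <= b <= 1 /\ f (depol b (P i).1) (depol b (P i).2) = tgt (S i))).
  apply: step_exists => //; split; first exact: hlow.
  rewrite h3; exact: hnoninc.
have hinv : forall i, inv i.
  elim=> [|i IH].
    split => //; split => //=.
    rewrite /tgt ht0.
    have -> : Lam 0 rho = rho by do 2 apply: functional_extensionality => ?; exact: hLam0.
    have -> : Lam 0 sigma = sigma by do 2 apply: functional_extensionality => ?; exact: hLam0.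
    by [].
  have [hb hf] := hspec i IH; have [h1 [h2 _]] := IH.
  split; [|split] => /=.
  - exact: state_depol.
  - exact: state_depol.
  - exact: hf.
pose a := fun i => let b := bsel f tgt i (P i) in
   if Rlt_dec 0 b then Rpower b (/ (t (S i) - t i)) else 0.
have ha : forall i, 0 <= a i <= 1 /\ rpow (a i) (t (S i) - t i) = bsel f tgt i (P i).
  move=> i; have [hb _] := hspec i (hinv i).
  have hD : 0 < t (S i) - t i by have := ht i; lra.
  exact: (root_pow hb hD).
exists a; split; first by move=> i; have [] := ha i.
have hev : forall i, evol a t rho i = (P i).1 /\ evol a t sigma i = (P i).2.
  elim=> [|i [IH1 IH2]] //=.
  rewrite /W IH1 IH2 (ha i).2; split => //.
move=> i; have [-> ->] := hev i.
by have [_ [_ ->]] := hinv i.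
Qed.
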